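(* Let $H=(V,E)$ be a graph and let $\theta\in(\mathbb{S}^1)^V$ be a stable state on $H$ with $\rho_1(\theta)\in[0,1]$. Then for all $0<\gamma<\beta\le\pi/2$, \[e(\mathcal{C}_\beta,\mathcal{C}_\beta)\ \ge\ e(\mathcal{C}_{\pi/2},\mathcal{C}_\beta)\ \ge\ \sin(\beta-\gamma)\, e(\mathcal{C}_\beta,\mathcal{C}_\gamma^c).\]
   Context: For a graph $H$ with adjacency matrix $A$, $\mathcal{E}_H(\theta)=\frac12\sum_{u,v\in V}A_{u,v}(1-\cos(\theta_u-\theta_v))$ for $\theta\in(\mathbb{S}^1)^V$. A stable state is $\theta$ with $\nabla\mathcal{E}_H(\theta)=0$ and $\nabla^2\mathcal{E}_H(\theta)$ positive semidefinite. $\rho_1(\theta)=|V|^{-1}\sum_{v\in V}e^{i\theta_v}$. Viewing $\mathbb{S}^1$ as $(-\pi,\pi]$, $\mathcal{C}_\beta=\{v\in V:|\theta_v|\ge\beta\}$ and $\mathcal{C}_\gamma^c=V\setminus\mathcal{C}_\gamma$. For $X,Y\subseteq V$, $e(X,Y)=\sum_{x\in X,y\in Y}A_{x,y}$. *)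

(* Defs.v *)
From HB Require Import structures.
From mathcomp Require Import all_boot all_order all_algebra.
From mathcomp Require Import all_classical all_reals all_analysis.
Set Implicit Arguments. Unset Strict Implicit. Unset Printing Implicit Defensive.
Import Order.TTheory GRing.Theory Num.Theory.
Local Open Scope ring_scope.

Section Kuramoto.
Variables (R : realType) (V : finType).

Definition simple_graph (adj : rel V) : Prop :=
  symmetric adj /\ irreflexive adj.

Definition adjm (adj : rel V) (u v : V) : R := (adj u v)%:R.

Definition energy (adj : rel V) (theta : V -> R) : R :=
  2^-1 * \sum_(u : V) \sum_(v : V) adjm adj u v * (1 - cos (theta u - theta v)).

Definition partial (i : V) (f : (V -> R) -> R) (x : V -> R) : R :=
  derive1 (fun t : R => f (fun v => x v + t * (v == i)%:R)) 0.

Definition gradient (f : (V -> R) -> R) (x : V -> R) (i : V) : R :=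
  partial i f x.
Definition hessian (f : (V -> R) -> R) (x : V -> R) (i j : V) : R :=
  partial j (partial i f) x.

Definition psd (M : V -> V -> R) : Prop :=
  forall y : V -> R, 0 <= \sum_(i : V) \sum_(j : V) y i * M i j * y j.

Definition stable_state (adj : rel V) (theta : V -> R) : Prop :=
  (forall i, gradient (energy adj) theta i = 0) /\ psd (hessian (energy adj) theta).

(* theta in (S^1)^V, with S^1 viewed as (-pi, pi]. *)
Definition angles (theta : V -> R) : Prop :=
  forall v, - pi < theta v /\ theta v <= pi.

(* rho_1(theta) = |V|^-1 sum_v e^{i theta_v}: real and imaginary parts. *)
Definition rho1_re (theta : V -> R) : R := (#|V|%:R)^-1 * \sum_(v : V) cos (theta v).
Definition rho1_im (theta : V -> R) : R := (#|V|%:R)^-1 * \sum_(v : V) sin (theta v).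

(* rho_1(theta) is in [0,1] (as a subset of C). *)
Definition rho1_in01 (theta : V -> R) : Prop :=
  rho1_im theta = 0 /\ 0 <= rho1_re theta <= 1.

Definition Cset (theta : V -> R) (b : R) : {set V} := [set v | b <= `|theta v|].
Definition Cset_c (theta : V -> R) (b : R) : {set V} := ~: Cset theta b.

Definition eXY (adj : rel V) (X Y : {set V}) : R :=
  \sum_(x in X) \sum_(y in Y) adjm adj x y.

End Kuramoto.

(* Main.v *)
Require Import Defs.
From HB Require Import structures.
From mathcomp Require Import all_boot all_order all_algebra.
From mathcomp Require Import all_classical all_reals all_analysis.
From mathcomp Require Import ring lra.
Import Order.TTheory GRing.Theory Num.Theory.
Local Open Scope ring_scope.

Section Aux.
Variable R : realType.

Lemma is_derive_comp1 (f g : R -> R) (x df dg : R) :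
  is_derive x 1 f df -> is_derive (f x) 1 g dg -> is_derive x 1 (g \o f) (dg * df).
Proof.
move=> hf hg.
have df1 : derivable f x 1 by exact: ex_derive.
have dg1 : derivable g (f x) 1 by exact: ex_derive.
apply: DeriveDef.
  apply/derivable1_diffP; apply: differentiable_comp; exact/derivable1_diffP.
by rewrite -derive1E derive1_comp // !derive1E !derive_val.
Qed.

Lemma is_derive_lin (a c t : R) : is_derive t 1 (fun s : R => a + s * c) c.
Proof.
have h1 : is_derive t (1:R) (cst a : R -> R) 0 := @is_derive_cst R R R a t 1.
have h2 := (@is_deriveZ R R R id c t 1 1 (@is_derive_id R R t 1)).
have h := is_deriveD h1 h2.
rewrite add0r in h.
have e : (fun s : R => a + s * c) = (cst a + c \*: (@id R)).
  by apply/funext => s /=; rewrite mulrC.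
rewrite e; by move: h; congr is_derive; rewrite /GRing.scale /= mulr1.
Qed.

Lemma is_derive_cosl (a c t : R) :
  is_derive t 1 (fun s : R => 1 - cos (a + s * c)) (sin (a + t * c) * c).
Proof.
have h1 : is_derive t 1 (cos \o (fun s : R => a + s * c)) (- sin (a + t*c) * c).
  apply: is_derive_comp1; first exact: is_derive_lin.
have h2 := is_deriveB (is_derive_cst (1:R) t 1) h1.
by rewrite sub0r mulNr opprK in h2.
Qed.

Lemma is_derive_sinl (a c t : R) :
  is_derive t 1 (fun s : R => sin (a + s * c)) (cos (a + t * c) * c).
Proof.
have h := @is_derive_comp1 (fun s : R => a + s * c) sin t c (cos (a + t * c))
  (is_derive_lin a c t) (@is_derive_sin R (a + t * c)).
exact: h.
Qed.

Lemma is_derive_sumT (I : finType) (h : I -> R -> R) (x : R) (dh : I -> R) :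
  (forall i, is_derive x 1 (h i) (dh i)) ->
  is_derive x (1:R) (fun t => \sum_i h i t) (\sum_i dh i).
Proof.
move=> H.
have -> : (fun t => \sum_i h i t) = \sum_i h i by apply/funext => t; rewrite fct_sumE.
elim/big_ind2 : _ => //.
  exact: is_derive_cst.
by move=> f1 d1 f2 d2 h1' h2'; apply: is_deriveD.
Qed.

Lemma is_derive_scal (f : R -> R) (k x df : R) :
  is_derive x 1 f df -> is_derive x 1 (fun t => k * f t) (k * df).
Proof. by move=> h; have := is_deriveZ k h. Qed.


Variable V : finType.

Lemma sum_delta (f : V -> R) i : \sum_u f u * (u == i)%:R = f i.
Proof.
rewrite (bigD1 i) //= eqxx mulr1 big1 ?addr0 // => u /negbTE ->.
by rewrite mulr0.
Qed.

Lemma sym_sum (adj : rel V) (hs : symmetric adj) (f : V -> V -> R) :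
  \sum_u \sum_v adjm R adj u v * f u v = \sum_u \sum_v adjm R adj u v * f v u.
Proof.
rewrite exchange_big /=; apply: eq_bigr => u _; apply: eq_bigr => v _.
by rewrite /adjm hs.
Qed.

Lemma partial_energy (adj : rel V) (hs : symmetric adj) (x : V -> R) i :
  partial i (energy adj) x = \sum_v adjm R adj i v * sin (x i - x v).
Proof.
rewrite /partial derive1E.
pose c (u v : V) : R := (u == i)%:R - (v == i)%:R.
have e : (fun t => energy adj (fun v => x v + t * (v == i)%:R)) =
  (fun t => 2^-1 * \sum_u \sum_v adjm R adj u v * (1 - cos (x u - x v + t * c u v))).
  apply/funext => t; rewrite /energy; congr (_ * _); apply: eq_bigr => u _.
  apply: eq_bigr => v _; congr (_ * (1 - cos _)); rewrite /c; ring.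
rewrite e.
have key : is_derive (0:R) 1
   (fun t => 2^-1 * \sum_u \sum_v adjm R adj u v * (1 - cos (x u - x v + t * c u v)))
   (2^-1 * \sum_u \sum_v adjm R adj u v * (sin (x u - x v + 0 * c u v) * c u v)).
  apply: is_derive_scal; apply: is_derive_sumT => u; apply: is_derive_sumT => v.
  apply: is_derive_scal; exact: is_derive_cosl.
rewrite (@derive_val _ _ _ _ _ _ _ key).
under eq_bigr => u _ do under eq_bigr => v _ do
  rewrite mul0r addr0 /c mulrBr mulrBr mulrA mulrA.
under eq_bigr => u _ do rewrite sumrB -(@mulr_suml _ _ _ _ (fun v => adjm R adj u v * sin (x u - x v)) ((u == i)%:R)).
rewrite sumrB sum_delta exchange_big /=.
under [X in _ - X]eq_bigr => v _ do rewrite -mulr_suml.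
rewrite sum_delta.
have -> : \sum_u adjm R adj u i * sin (x u - x i) = - \sum_v adjm R adj i v * sin (x i - x v).
  rewrite -sumrN; apply: eq_bigr => u _; rewrite /adjm hs -mulrN -sinN opprB //.
by rewrite opprK; field.
Qed.

Lemma hess_diag (adj : rel V) (hs : symmetric adj) (hirr : irreflexive adj) (x : V -> R) i :
  hessian (energy adj) x i i = \sum_v adjm R adj i v * cos (x i - x v).
Proof.
rewrite /hessian {1}/partial derive1E.
have e : (fun t => partial i (energy adj) (fun v => x v + t * (v == i)%:R)) =
  (fun t => \sum_v adjm R adj i v * sin (x i - x v + t * (1 - (v == i)%:R))).
  apply/funext => t; rewrite partial_energy //; apply: eq_bigr => v _.
  congr (_ * sin _); rewrite eqxx mulr1; ring.
rewrite e.
have key : is_derive (0:R) 1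
   (fun t => \sum_v adjm R adj i v * sin (x i - x v + t * (1 - (v == i)%:R)))
   (\sum_v adjm R adj i v * (cos (x i - x v + 0 * (1 - (v == i)%:R)) * (1 - (v == i)%:R))).
  apply: is_derive_sumT => v; apply: is_derive_scal; exact: is_derive_sinl.
rewrite (@derive_val _ _ _ _ _ _ _ key); apply: eq_bigr => v _.
rewrite mul0r addr0; have [->|_] := eqVneq v i.
  by rewrite /adjm hirr !mul0r.
by rewrite subr0 mulr1.
Qed.

Lemma psd_diag (M : V -> V -> R) : psd M -> forall u, 0 <= M u u.
Proof.
move=> h u; have := h (fun v => (v == u)%:R).
under eq_bigr => i _ do rewrite sum_delta.
under eq_bigr => i _ do rewrite mulrC.
by rewrite sum_delta.
Qed.


Lemma sin_piB (x : R) : sin (pi - x) = sin x.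
Proof. by rewrite sinB sinpi cospi mul0r sub0r mulN1r opprK. Qed.

Lemma sin_lb (d x : R) : 0 <= d -> d <= x -> x <= pi - d -> sin d <= sin x.
Proof.
move=> d0 dx xp; have pi0 := pi_gt0 R.
have key : forall y, d <= y -> y <= pi / 2 -> sin d <= sin y.
  move=> y dy yp; rewrite leNgt ltr_sin ?in_itv /= -?leNgt //; apply/andP; split; lra.
have [xl|xg] := lerP x (pi / 2); first exact: (key x dx xl).
by rewrite -[sin x]sin_piB; apply: key; lra.
Qed.

Lemma cos_le0 (x : R) : pi / 2 <= `|x| -> `|x| <= pi -> cos x <= 0.
Proof.
move=> h1 h2; rewrite -cos_norm.
have -> : `|x| = (`|x| - pi / 2) + pi / 2 by rewrite subrK.
rewrite cosDpihalf oppr_le0; apply: sin_ge0_pi; apply/andP; split; lra.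
Qed.

End Aux.

Section Main.
Variables (R : realType) (gamma beta : R).
Hypotheses (hg : 0 < gamma) (hgb : gamma < beta) (hb : beta <= pi / 2).

Definition iM (a : R) : bool := (beta <= `|a|) && (`|a| < pi / 2).
Definition iF (a : R) : bool := pi / 2 <= `|a|.
Definition iZ (a : R) : bool := `|a| < gamma.
Definition ww (a : R) : R := if iM a then (if 0 <= a then 1 else -1) else 0.
Definition ss : R := sin (beta - gamma).
Definition BB (a b : R) : R :=
  ss * ((iM a)%:R * (iZ b)%:R + (iM b)%:R * (iZ a)%:R)
  - ((iM a)%:R * (iF b)%:R + (iM b)%:R * (iF a)%:R).

Lemma ss_ge0 : 0 <= ss.
Proof. have := pi_gt0 R; move=> pi0; have := hg; have := hgb; have := hb; move=> *; apply: sin_ge0_pi; apply/andP; split; lra. Qed.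

Lemma core (a b : R) : beta <= a -> a < pi / 2 -> ~~ iM b ->
  ss * (iZ b)%:R - (iF b)%:R <= sin (a - b).
Proof.
move=> ha1 ha2; have pi0 := pi_gt0 R; have hg' := hg; have hgb' := hgb; have hb' := hb; rewrite /iM /iZ /iF /ss => hMb.
have [hz|hz] := ltrP `|b| gamma.
  have hf : (pi / 2 <= `|b|) = false by apply/negbTE; rewrite -ltNge; lra.
  rewrite hf /= mulr1 subr0; move: hz; rewrite ltr_norml => /andP [hz1 hz2].
  apply: sin_lb; lra.
rewrite mulr0 sub0r.
have [hf|hf] := lerP (pi / 2) `|b|; first by rewrite sin_geN1.
rewrite oppr0; apply: sin_ge0_pi.
have hb2 : `|b| < beta by rewrite ltNge; apply: contra hMb => ->; rewrite hf.
move: hb2; rewrite ltr_norml => /andP [h1 h2]; apply/andP; split; lra.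
Qed.


Lemma iM_N a : iM (- a) = iM a. Proof. by rewrite /iM normrN. Qed.
Lemma iF_N a : iF (- a) = iF a. Proof. by rewrite /iF normrN. Qed.
Lemma iZ_N a : iZ (- a) = iZ a. Proof. by rewrite /iZ normrN. Qed.

Lemma iM_ZF a : iM a -> iZ a = false /\ iF a = false.
Proof.
have hg' := hg; have hgb' := hgb.
rewrite /iM /iZ /iF => /andP [h1 h2]; split; apply/negbTE; rewrite -?leNgt -?ltNge //.
lra.
Qed.

Lemma ww_N a : ww (- a) = - ww a.
Proof.
rewrite /ww iM_N; case: ifP => hM; last by rewrite oppr0.
have ha0 : a != 0.
  apply: contraTneq hM => ->; rewrite /iM normr0; apply/negP => /andP [h1 _].
  have := hg; have := hgb; lra.
rewrite oppr_ge0; case: ltrgtP => h //=; rewrite ?opprK //.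
by move: ha0; rewrite h eqxx.
Qed.

Lemma BB_C a b : BB a b = BB b a.
Proof. by rewrite /BB [X in ss * X]addrC [X in _ - X]addrC. Qed.

Lemma BB_N a b : BB (- a) (- b) = BB a b.
Proof. by rewrite /BB !iM_N !iZ_N !iF_N. Qed.

Lemma PB1 a b : iM a -> 0 <= a -> ~~ iM b -> BB a b <= (ww a - ww b) * sin (a - b).
Proof.
move=> hMa ha hMb; have [hZa hFa] := @iM_ZF a hMa.
rewrite /BB /ww hMa (negbTE hMb) ha hZa hFa /= !mul0r !mul1r !addr0 subr0 mul1r.
move: hMa; rewrite /iM ger0_norm // => /andP [h1 h2].
exact: core.
Qed.

Lemma PB2 a b : iM a -> ~~ iM b -> BB a b <= (ww a - ww b) * sin (a - b).
Proof.
move=> hMa hMb; have [ha|ha] := lerP 0 a; first exact: PB1.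
have := PB1 (- a) (- b); rewrite iM_N iM_N oppr_ge0 BB_N !ww_N.
move=> /(_ hMa (ltW ha) hMb).
by rewrite -opprD -opprD sinN mulrNN.
Qed.

Lemma PB a b : BB a b <= (ww a - ww b) * sin (a - b).
Proof.
case hMa: (iM a); case hMb: (iM b).
- have [hZa hFa] := @iM_ZF a hMa; have [hZb hFb] := @iM_ZF b hMb.
  rewrite /BB hZa hFa hZb hFb !mulr0 !addr0 subr0 mulr0.
  have pi0 := pi_gt0 R; have hg' := hg; have hgb' := hgb; have hb' := hb.
  rewrite /ww hMa hMb; move: hMa hMb; rewrite /iM.
  move=> /andP [a1 a2] /andP [b1 b2].
  case: (lerP 0 a) => ha; case: (lerP 0 b) => hb0; rewrite ?subrr ?mul0r //.
  + rewrite (ger0_norm ha) (ltr0_norm hb0) in a1 a2 b1 b2.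
    have : 0 <= sin (a - b) by apply: sin_ge0_pi; apply/andP; split; lra.
    lra.
  + rewrite (ltr0_norm ha) (ger0_norm hb0) in a1 a2 b1 b2.
    have : 0 <= sin (b - a) by apply: sin_ge0_pi; apply/andP; split; lra.
    rewrite -opprB sinN; lra.
- by apply: PB2; rewrite ?hMa ?hMb.
- rewrite BB_C; have := PB2 b a; rewrite hMb hMa => /(_ isT isT).
  by rewrite -[b - a]opprB sinN -[ww b - ww a]opprB mulrNN.
- by rewrite /BB /ww hMa hMb !mul0r !addr0 subrr mul0r mulr0 subr0.
Qed.

Lemma CB b : ss * (iZ b)%:R - (iF b)%:R <= cos b.
Proof.
have pi0 := pi_gt0 R; have hg' := hg; have hgb' := hgb; have hb' := hb.
rewrite /iZ /iF /ss.
have [hz|hz] := ltrP `|b| gamma.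
  have -> : (pi / 2 <= `|b|) = false by apply/negbTE; rewrite -ltNge; lra.
  rewrite mulr1 subr0 -cos_norm -cosN -sinDpihalf.
  have := normr_ge0 b => h0.
  apply: sin_lb; lra.
rewrite mulr0 sub0r.
have [hf|hf] := lerP (pi / 2) `|b|; first by rewrite cos_geN1.
rewrite oppr0; apply: cos_ge0_pihalf.
by move: hf; rewrite ltr_norml => /andP [h1 h2]; apply/andP; split; lra.
Qed.


Definition iC (a : R) : bool := beta <= `|a|.
Definition QQ (a b : R) : R := (iF a)%:R * (iC b)%:R - ss * (iC a)%:R * (iZ b)%:R.

Lemma iC_split a : (iC a)%:R = (iM a)%:R + (iF a)%:R :> R.
Proof.
rewrite /iC /iM /iF; have hb' := hb.
have [h|h] := lerP (pi / 2) `|a|.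
  by rewrite andbF (le_trans hb' h) add0r.
by rewrite andbT addr0.
Qed.

Lemma MF_excl a : ~~ (iM a && iF a).
Proof. by rewrite /iM /iF; apply/negP => /andP [/andP [_ h1] h2]; move: h1; rewrite ltNge h2. Qed.

Lemma PP a b : 0 <= QQ a b + QQ b a + (ww a - ww b) * sin (a - b)
  + (iF a)%:R * cos b + (iF b)%:R * cos a.
Proof.
have h1 := PB a b; have h2 := CB b; have h3 := CB a; have h4 := ss_ge0.
have ea := MF_excl a; have eb := MF_excl b.
move: h1; rewrite /QQ !iC_split /BB.
move: (ww a - ww b) (sin (a - b)) (cos a) (cos b) h2 h3 ea eb h4 => X Y ca cb h2 h3 ea eb h4.
move: (iM a) (iF a) (iZ a) (iM b) (iF b) (iZ b) h2 h3 ea eb.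
move: (ss) h4 => S h4.
case; case; case; case; case; case => //= h2 h3 _ _ h1; nra.
Qed.

End Main.

Theorem lemma2p9 (R : realType) (V : finType) (adj : rel V) (theta : V -> R)
  (hH : simple_graph adj) (hang : angles theta)
  (hstab : stable_state adj theta) (hrho : rho1_in01 theta)
  (gamma beta : R) (hg : 0 < gamma) (hgb : gamma < beta) (hb : beta <= pi / 2) :
  @eXY R V adj (Cset theta beta) (Cset theta beta)
    >= @eXY R V adj (Cset theta (pi / 2)) (Cset theta beta)
  /\ @eXY R V adj (Cset theta (pi / 2)) (Cset theta beta)
    >= sin (beta - gamma) * @eXY R V adj (Cset theta beta) (Cset_c theta gamma).
Proof.
have [hsym hirr] := hH; have [hgr hps] := hstab.
set A := adjm R adj.
have G u : \sum_v A u v * sin (theta u - theta v) = 0.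
  by rewrite -partial_energy //; exact: hgr.
have Hd u : 0 <= \sum_v A u v * cos (theta u - theta v).
  by rewrite -hess_diag //; exact: psd_diag hps u.
have A0 u v : 0 <= A u v by rewrite /A /adjm ler0n.
have eX (X Y : {set V}) : @eXY R V adj X Y = \sum_u \sum_v A u v * ((u \in X)%:R * (v \in Y)%:R).
  rewrite /eXY big_mkcond /=; apply: eq_bigr => u _.
  case: (u \in X) => /=.
    by rewrite big_mkcond /=; apply: eq_bigr => v _; case: (v \in Y); rewrite ?mulr1 ?mulr0.
  by rewrite big1 // => v _; rewrite mul0r mulr0.
have memC b v : (v \in Cset theta b) = (b <= `|theta v|) by rewrite inE.
have memZ v : (v \in Cset_c theta gamma) = @iZ R gamma (theta v).
  by rewrite /Cset_c inE memC /iZ ltNge.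
split.
  rewrite !eX; apply: ler_sum => u _; apply: ler_sum => v _; rewrite !memC.
  apply: ler_wpM2l => //; apply: ler_wpM2r => //.
  case: (lerP (pi / 2) `|theta u|) => h //=.
  by rewrite (le_trans hb h).
set w := fun v => ww R beta (theta v).
have S1 : \sum_u \sum_v A u v * ((w u - w v) * sin (theta u - theta v)) = 0.
  have e1 u v : A u v * ((w u - w v) * sin (theta u - theta v)) =
     w u * (A u v * sin (theta u - theta v)) - A u v * (w v * sin (theta u - theta v)).
    by ring.
  under eq_bigr => u _ do under eq_bigr => v _ do rewrite e1.
  under eq_bigr => u _ do rewrite sumrB -mulr_sumr G mulr0 sub0r.
  rewrite sumrN (@sym_sum R V adj hsym (fun u v => w v * sin (theta u - theta v))) /=.
  have e2 u v : A u v * (w u * sin (theta v - theta u)) = - (w u * (A u v * sin (theta u - theta v))).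
    by rewrite -[theta v - theta u]opprB sinN; ring.
  under eq_bigr => u _ do under eq_bigr => v _ do rewrite e2.
  under eq_bigr => u _ do rewrite sumrN -mulr_sumr G mulr0 oppr0.
  by rewrite big1 // oppr0.
have S2 : \sum_u \sum_v A u v * ((iF R (theta u))%:R * cos (theta v)) <= 0.
  apply: sumr_le0 => u _.
  have e3 v : A u v * ((iF R (theta u))%:R * cos (theta v)) =
     (iF R (theta u))%:R * (cos (theta u) * (A u v * cos (theta u - theta v))
        + sin (theta u) * (A u v * sin (theta u - theta v))).
    have ec : cos (theta v) = cos (theta u) * cos (theta u - theta v)
       + sin (theta u) * sin (theta u - theta v) by rewrite -cosB opprB addrC subrK.
    rewrite ec; ring.
  under eq_bigr => v _ do rewrite e3.
  rewrite -mulr_sumr big_split /= -!mulr_sumr G mulr0 addr0.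
  case hF: (iF R (theta u)); last by rewrite mul0r.
  rewrite mul1r; apply: mulr_le0_ge0 (Hd u).
  apply: cos_le0; first exact: hF.
  have [h1 h2] := hang u; rewrite ler_norml h2 andbT; exact: ltW.
have S2' : \sum_u \sum_v A u v * ((iF R (theta v))%:R * cos (theta u)) <= 0.
  by rewrite (@sym_sum R V adj hsym (fun u v => (iF R (theta v))%:R * cos (theta u))).
have S0 : 0 <= \sum_u \sum_v A u v * (QQ R gamma beta (theta u) (theta v)
     + QQ R gamma beta (theta v) (theta u) + (w u - w v) * sin (theta u - theta v)
     + (iF R (theta u))%:R * cos (theta v) + (iF R (theta v))%:R * cos (theta u)).
  apply: sumr_ge0 => u _; apply: sumr_ge0 => v _; apply: mulr_ge0 => //.
  exact: PP.
have S0' : 0 <= \sum_u \sum_v A u v * QQ R gamma beta (theta u) (theta v)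
   + \sum_u \sum_v A u v * QQ R gamma beta (theta v) (theta u)
   + \sum_u \sum_v A u v * ((w u - w v) * sin (theta u - theta v))
   + \sum_u \sum_v A u v * ((iF R (theta u))%:R * cos (theta v))
   + \sum_u \sum_v A u v * ((iF R (theta v))%:R * cos (theta u)).
  apply: (le_trans S0); rewrite le_eqVlt; apply/orP; left; apply/eqP.
  rewrite -!big_split; apply: eq_bigr => u _; rewrite -!big_split; apply: eq_bigr => v _.
  by rewrite !mulrDr.
rewrite (@sym_sum R V adj hsym (fun u v => QQ R gamma beta (theta v) (theta u))) /= in S0'.
rewrite S1 in S0'.
have eq : \sum_u \sum_v A u v * QQ R gamma beta (theta u) (theta v) =
   @eXY R V adj (Cset theta (pi / 2)) (Cset theta beta)
   - sin (beta - gamma) * @eXY R V adj (Cset theta beta) (Cset_c theta gamma).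
  rewrite !eX mulr_sumr -sumrB; apply: eq_bigr => u _.
  rewrite mulr_sumr -sumrB; apply: eq_bigr => v _.
  rewrite !memC memZ /QQ /iC /iF /ss; ring.
rewrite eq in S0'.
lra.
Qed.
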